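(* Let $R,\mu$ be positive integers with $\mu<R$. (i) For all elements $\lambda$ of an orbit under $G_{R,\mu}$, the values $\mathrm P^+_{R,\mu}(\lambda)$ are identical; the same holds for any orbit under $G^\oplus_{R,\mu}$. (ii) If $\mathbb Z_R$ is a single orbit under $G_{R,\mu}$, then $\mathrm P^+_{R,\mu}(\lambda)=\frac1\mu\binom{R-1}{\mu-1}$ for all $\lambda\in\mathbb Z_R$.
   Context: $\mathbb Z_R$ is the ring of integers modulo $R$, $\mathbb Z_R^*$ its group of units. $\mathrm P^+_{R,\mu}(\lambda)$ is the number of $\mu$-element subsets of $\mathbb Z_R$ whose elements sum to $\lambda$ in $\mathbb Z_R$. $G_{R,\mu}$ is the group of maps $\lambda\mapsto\lambda\ell+u\mu$ on $\mathbb Z_R$ with $\ell\in\mathbb Z_R^*$, $u\in\{0,\dots,R-1\}$; $G^\oplus_{R,\mu}$ is its subgroup with $\ell=1$. An orbit is an equivalence class of $\mathbb Z_R$ under ''$\lambda_2=\lambda_1\varphi$ for some $\varphi$ in the group''. *)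

(* Defs.v *)
From mathcomp Require Import all_boot all_algebra.
Set Implicit Arguments. Unset Strict Implicit. Unset Printing Implicit Defensive.
Import GRing.Theory.
Local Open Scope ring_scope.

(* Z_R is modelled by 'Z_R; this is faithful since we always assume 1 < R. *)

Definition Pplus (R mu : nat) (lam : 'Z_R) : nat :=
  #|[set S : {set 'Z_R} | (#|S| == mu)%N && (\sum_(x in S) x == lam)]|.

Definition Gmap (R mu : nat) (l : 'Z_R) (u : nat) (lam : 'Z_R) : 'Z_R :=
  lam * l + u%:R * mu%:R.

Definition in_G (R mu : nat) (phi : 'Z_R -> 'Z_R) : Prop :=
  exists l : 'Z_R, exists u : nat,
    l \is a GRing.unit /\ (u < R)%N /\ phi =1 Gmap mu l u.

Definition in_Gplus (R mu : nat) (phi : 'Z_R -> 'Z_R) : Prop :=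
  exists u : nat, (u < R)%N /\ phi =1 Gmap mu 1 u.

Definition same_orbit (R : nat) (inGrp : ('Z_R -> 'Z_R) -> Prop) (l1 l2 : 'Z_R) : Prop :=
  exists phi, inGrp phi /\ l2 = phi l1.

(* Main.v *)
Require Import Defs.
From mathcomp Require Import all_boot all_algebra.
Import GRing.Theory.
Local Open Scope ring_scope.

Lemma Pplus_le (R mu : nat) (lam l c : 'Z_R) : l \is a GRing.unit ->
  leq (Pplus mu lam) (Pplus mu (lam * l + c * mu%:R)).
Proof.
move=> lu.
pose f := fun x : 'Z_R => x * l + c.
have finj : injective f.
  by move=> x y; rewrite /f => /addIr /(mulIr lu).
rewrite /Pplus -(card_imset _ (imset_inj finj)).
apply: subset_leq_card; apply/subsetP => T /imsetP [S].
rewrite inE => /andP [/eqP cS /eqP sS] ->.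
rewrite inE card_imset // cS eqxx /=.
rewrite big_imset /=; last by move=> x y _ _; apply: finj.
rewrite /f big_split /= -mulr_suml sS sumr_const cS mulr_natr //.
Qed.

Lemma Pplus_eq (R mu : nat) (lam l c : 'Z_R) : l \is a GRing.unit ->
  Pplus mu (lam * l + c * mu%:R) = Pplus mu lam.
Proof.
move=> lu; apply/eqP; rewrite eqn_leq Pplus_le // andbT.
have H : (lam * l + c * mu%:R) * l^-1 + (- (c * l^-1)) * mu%:R = lam.
  by rewrite mulrDl mulrK // mulNr [c * _]mulrC -mulrA [c / l * _]mulrC addrK.
by rewrite -{2}H Pplus_le ?unitrV.
Qed.

Theorem theorem4p6 (R mu : nat) (hmu : (0 < mu)%N) (hmuR : (mu < R)%N) :
  (* (i) *)
  (forall l1 l2 : 'Z_R, same_orbit (@in_G R mu) l1 l2 -> Pplus mu l1 = Pplus mu l2) /\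
  (forall l1 l2 : 'Z_R, same_orbit (@in_Gplus R mu) l1 l2 -> Pplus mu l1 = Pplus mu l2) /\
  (* (ii) *)
  ((forall l1 l2 : 'Z_R, same_orbit (@in_G R mu) l1 l2) ->
   forall lam : 'Z_R,
     ((Pplus mu lam)%:R : rat) = (mu%:R)^-1 * ('C(R.-1, mu.-1))%:R).
Proof.
have partI : forall l1 l2 : 'Z_R, same_orbit (@in_G R mu) l1 l2 -> Pplus mu l1 = Pplus mu l2.
  move=> l1 l2 [phi [[l [u [lu [_ e]]]] ->]].
  by rewrite e /Gmap Pplus_eq.
split=> //; split.
  move=> l1 l2 [phi [[u [uR e]] ->]]; rewrite e /Gmap Pplus_eq //; exact: unitr1.
move=> orb lam.
have R1 : (1 < R)%N by apply: leq_ltn_trans hmuR.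
have cardZ : #|'Z_R| = R by rewrite card_ord Zp_cast.
have hsum : (\sum_(x : 'Z_R) Pplus mu x = 'C(R, mu))%N.
  have -> : 'C(R, mu) = 'C(#|'Z_R|, mu) by rewrite cardZ.
  rewrite -card_draws cardE -sum1_size /=.
  rewrite (partition_big (fun S : {set 'Z_R} => \sum_(x in S) x) xpredT) //=.
  apply: eq_bigr => x _.
  rewrite /Pplus cardE -sum1_size /=.
  rewrite big_enum big_enum_cond /=; apply: eq_bigl => S; rewrite !inE.
  done.

have hc : forall x : ('Z_R), Pplus mu x = Pplus mu (0 : 'Z_R).
  by move=> x; symmetry; exact: (partI _ _ (orb 0 x)).
have : (R * Pplus mu lam = 'C(R, mu))%N.
  rewrite -hsum (eq_bigr (fun _ => Pplus mu lam)); last by move=> x _; rewrite (hc x) (hc lam).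
  by rewrite sum_nat_const card_ord Zp_cast // mulnC.
move=> h.
have h2 : (mu * Pplus mu lam = 'C(R.-1, mu.-1))%N.
  apply/eqP; rewrite -(eqn_pmul2l (ltnW R1)) mul_bin_diag.
  by rewrite prednK // -h mulnCA.
rewrite -h2 natrM mulrA mulVf ?mul1r; first exact: erefl.
by rewrite Num.Theory.pnatr_eq0 -lt0n hmu.
Qed.
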